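(* Let $q > r \ge 1$ be integers. If $S_1$ and $S_2$ are $K_q^r$-cliques such that $S_1 \cap S_2 = \{e\}$ for some $r$-edge $e$, then there exists an independent $K_q^r$-hinge for $S_1$ and $S_2$.
   Context: An $r$-graph is identified with its edge set; $V(G)$ denotes its vertex set. $K_q^r$ is the complete $r$-graph on $q$ vertices, and a $K_q^r$-clique is an $r$-graph isomorphic to $K_q^r$. A $K_q^r$-decomposition of an $r$-graph $G$ is a partition of the edges of $G$ into $K_q^r$-cliques. A vertex set $X$ is independent in an $r$-graph $H$ if no edge of $H$ is contained in $X$. Given two $K_q^r$-cliques $S, S'$ with $S \cap S' = \{e\}$ for an $r$-edge $e$, a $K_q^r$-hinge for $S$ and $S'$ is an $r$-graph $H$ that is edge-disjoint from $S \cup S'$ such that $H \cup (S \setminus \{e\})$ has a $K_q^r$-decomposition and $H \cup (S' \setminus \{e\})$ has a $K_q^r$-decomposition. The hinge is independent if $V(S) \cup V(S')$ is independent in $H$. *)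

(* Defs.v *)
From HB Require Import structures.
From mathcomp Require Import all_boot.
From mathcomp Require Import finmap.
Set Implicit Arguments. Unset Strict Implicit. Unset Printing Implicit Defensive.
Local Open Scope fset_scope.

(* Vertices are natural numbers (an infinite supply, so hinges may use new
   vertices). An r-graph is a finite set of edges, each edge a finite set of
   exactly r vertices. *)
Definition edge := {fset nat}.
Definition graph := {fset edge}.

Definition is_rgraph (r : nat) (G : graph) : Prop :=
  forall e, e \in G -> #|` e| = r.

Definition vset (G : graph) : {fset nat} := \bigcup_(e <- G) e.

Definition complete_on (r : nat) (X : {fset nat}) : graph :=
  [fset e in fpowerset X | #|` e| == r].

Definition is_clique (q r : nat) (S : graph) : Prop :=
  exists X : {fset nat}, #|` X| = q /\ S = complete_on r X.

Definition has_decomposition (q r : nat) (G : graph) : Prop :=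
  exists P : seq graph,
    (forall S, S \in P -> is_clique q r S) /\
    (forall i j, (i < size P)%N -> (j < size P)%N -> i <> j ->
        [disjoint nth fset0 P i & nth fset0 P j]) /\
    G = \bigcup_(S <- P) S.

Definition is_hinge (q r : nat) (S S' : graph) (e : edge) (H : graph) : Prop :=
  is_rgraph r H /\
  [disjoint H & S `|` S'] /\
  has_decomposition q r (H `|` (S `\ e)) /\
  has_decomposition q r (H `|` (S' `\ e)).

Definition independent (X : {fset nat}) (H : graph) : Prop :=
  forall f, f \in H -> ~ (f `<=` X).

Definition is_indep_hinge (q r : nat) (S S' : graph) (e : edge) (H : graph) : Prop :=
  is_hinge q r S S' e H /\ independent (vset S `|` vset S') H.

(* Main.v *)
Require Import Defs.
From HB Require Import structures.
From mathcomp Require Import all_boot all_algebra.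
From mathcomp Require Import finmap zify.
Set Implicit Arguments. Unset Strict Implicit. Unset Printing Implicit Defensive.
Import GRing.Theory.
Local Open Scope fset_scope.
Lemma complete_onP r X f : reflect (f `<=` X /\ #|` f| = r) (f \in complete_on r X).
Proof.
rewrite /complete_on !inE /=.
rewrite -[X in X && _]/(f \in fpowerset X) fpowersetE.
by apply: (iffP andP) => [[-> /eqP ->]|[-> ->]].
Qed.

Lemma dec_seq (q r : nat) (T : eqType) (x0 : T) (s : seq T) (K : T -> graph) :
  uniq s -> (forall c, c \in s -> is_clique q r (K c)) ->
  (forall c c', c \in s -> c' \in s -> c != c' -> [disjoint K c & K c']) ->
  has_decomposition q r (\bigcup_(c <- s) K c).
Proof.
move=> us Kcl Kdj; exists (map K s); split; last split.
- by move=> S /mapP [c cs ->]; apply: Kcl.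
- move=> i j; rewrite size_map => il jl nij.
  rewrite !(nth_map x0) //; apply: Kdj; rewrite ?mem_nth //.
  by rewrite nth_uniq //; apply/eqP.
- by rewrite big_map.
Qed.

Lemma sub_bigcup (P : seq graph) S : S \in P -> S `<=` \bigcup_(S' <- P) S'.
Proof. by move=> SP; have := @bigfcup_sup _ _ P S xpredT id SP isT; apply. Qed.

Lemma dec_union q r (A B : graph) : has_decomposition q r A -> has_decomposition q r B ->
  [disjoint A & B] -> has_decomposition q r (A `|` B).
Proof.
move=> [P1 [c1 [d1 e1]]] [P2 [c2 [d2 e2]]] dAB; exists (P1 ++ P2); split; last split.
- by move=> S; rewrite mem_cat => /orP [/c1|/c2].
- move=> i j; rewrite size_cat => il jl nij; rewrite !nth_cat.
  have hA : forall k, k < size P1 -> nth fset0 P1 k `<=` A.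
    by move=> k kl; rewrite e1; apply: sub_bigcup; rewrite mem_nth.
  have hB : forall k, k - size P1 < size P2 -> nth fset0 P2 (k - size P1) `<=` B.
    by move=> k kl; rewrite e2; apply: sub_bigcup; rewrite mem_nth.
  case: ltnP => il1; case: ltnP => jl1.
  + exact: d1.
  + have h1 := hB j; rewrite ltn_subLR // in h1; have h2 := h1 jl.
    apply: (fdisjointWl (hA _ il1)); rewrite fdisjoint_sym.
    by apply: (fdisjointWl h2); rewrite fdisjoint_sym.
  + have h1 := hB i; rewrite ltn_subLR // in h1; have := h1 il.
    move=> h2; apply: (fdisjointWl h2); rewrite fdisjoint_sym.
    by apply: (fdisjointWl (hA _ jl1)).
  + apply: d2; rewrite ?ltn_subLR //.
    by move=> /eqP; rewrite -(eqn_add2r (size P1)) !subnK // => /eqP.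
- by rewrite big_cat /= e1 e2.
Qed.

Local Open Scope ring_scope.
Section Alg.
Variables (F : fieldType) (q r : nat) (al : 'I_q -> F).
Hypothesis al_inj : injective al.

Definition word (c : 'rV[F]_r) (w0 : 'I_q -> F) (j : 'I_q) : F :=
  \sum_(l < r) c 0 l * al j ^+ l + w0 j.

Section Iota.
Variables (I : {set 'I_q}) (HI : #|I| = r).
Definition iota (i : 'I_r) : 'I_q := enum_val (cast_ord (esym HI) i).
Lemma iota_inj : injective iota.
Proof. by move=> i j /enum_val_inj /cast_ord_inj. Qed.
Lemma iota_surj j : j \in I -> exists i, iota i = j.
Proof.
move=> Hj; exists (cast_ord HI (enum_rank_in Hj j)).
by rewrite /iota cast_ordK enum_rankK_in.
Qed.
Definition Vm := Vandermonde r (\row_i al (iota i)).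
Lemma Vm_unit : Vm \in unitmx.
Proof.
rewrite unitmxE det_Vandermonde unitfE prodf_seq_neq0.
apply/allP => i _ /=; rewrite prodf_seq_neq0; apply/allP => j _ /=.
apply/implyP => lij; rewrite !mxE subr_eq0; apply/eqP => /al_inj /iota_inj E.
by rewrite E ltnn in lij.
Qed.
Lemma word_mx c w0 i : word c w0 (iota i) = (c *m Vm) 0 i + w0 (iota i).
Proof. by rewrite /word !mxE; congr (_ + _); apply: eq_bigr => l _; rewrite !mxE. Qed.
End Iota.

Lemma uniq_word (I : {set 'I_q}) (HI : #|I| = r) c c' w0 :
  {in I, forall j, word c w0 j = word c' w0 j} -> c = c'.
Proof.
move=> H.
have E : c *m Vm HI = c' *m Vm HI.
  apply/rowP => i.
  have := H (iota HI i) (enum_valP _).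
  by rewrite !word_mx => /addIr.
by rewrite -(mulmxK (Vm_unit HI) c) E mulmxK // Vm_unit.
Qed.

Lemma ex_word (I : {set 'I_q}) (HI : #|I| = r) w0 (g : 'I_q -> F) :
  exists c, {in I, forall j, word c w0 j = g j}.
Proof.
pose h : 'rV[F]_r := \row_i (g (iota HI i) - w0 (iota HI i)).
exists (h *m invmx (Vm HI)) => j /(iota_surj HI) [i <-].
by rewrite word_mx mulmxKV ?Vm_unit // mxE subrK.
Qed.
End Alg.
Local Open Scope fset_scope.

Section Trade.
Variables (F : finFieldType) (q r : nat) (al : 'I_q -> F) (phi : 'I_q -> F -> nat).
Hypothesis al_inj : injective al.
Hypothesis phi_inj : forall j s j' s', phi j s = phi j' s' -> j = j' /\ s = s'.

Definition Xs (w : 'I_q -> F) : {fset nat} := [fset phi j (w j) | j : 'I_q].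

Lemma XsP w u : reflect (exists j, u = phi j (w j)) (u \in Xs w).
Proof.
apply: (iffP idP) => [/imfsetP [j _ ->]|[j ->]]; first by exists j.
by apply/imfsetP; exists j.
Qed.

Lemma Xs_ext w w' : (forall j, w j = w' j) -> Xs w = Xs w'.
Proof.
move=> E; apply/fsetP => u; apply/XsP/XsP => [][j ->]; exists j; by rewrite E.
Qed.

Lemma card_Xs w : #|` Xs w| = q.
Proof.
rewrite /Xs card_imfset; last first.
  by move=> j j' /phi_inj [].
have := enum_finmem_uniq (mem {: 'I_q}); move/card_uniqP <-.
rewrite -[RHS](card_ord q); apply: eq_card => j; by rewrite enum_finmemE.
Qed.

Lemma cols w (f : {fset nat}) : f `<=` Xs w -> #|` f| = r ->
  #|[set j | phi j (w j) \in f]%SET| = r.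
Proof.
move=> fX <-.
set I := [set j | phi j (w j) \in f]%SET.
have -> : f = [fset phi j (w j) | j in I].
  apply/fsetP => u; apply/idP/imfsetP => [uf|[j]]; last by rewrite inE => + ->.
  by have /XsP [j E] := fsubsetP fX u uf; exists j; rewrite // inE -E.
rewrite card_imfset; last by move=> j j' /phi_inj [].
have := enum_finmem_uniq (mem I); move/card_uniqP <-.
by apply: eq_card => j; rewrite enum_finmemE.
Qed.

Definition Kc (w0 : 'I_q -> F) (c : 'rV[F]_r) : graph :=
  complete_on r (Xs (word al c w0)).

Lemma Kc_disj w0 c c' : c != c' -> [disjoint Kc w0 c & Kc w0 c'].
Proof.
move=> ncc; apply/fdisjointP => f /complete_onP [fX fr]; apply/negP.
move=> /complete_onP [fY _]; move/negP: ncc; apply.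
apply/eqP; apply: (@uniq_word _ _ _ _ al_inj _ (cols fX fr) c c' w0) => j; rewrite inE => jf.
have /XsP [j' E] := fsubsetP fY _ jf.
by case: (phi_inj E) => E1; rewrite -E1.
Qed.

Lemma Kc_clique w0 c : is_clique q r (Kc w0 c).
Proof. by exists (Xs (word al c w0)); rewrite card_Xs. Qed.

Definition U w0 := \bigcup_(c <- enum 'rV[F]_r) Kc w0 c.

Lemma U_sub w0 w1 : U w0 `<=` U w1.
Proof.
apply/fsubsetP => f /bigfcupP [c _ /complete_onP [fX fr]].
have [c' Hc'] := ex_word al_inj (cols fX fr) w1 (word al c w0).
apply/bigfcupP; exists c'; first by rewrite mem_enum.
apply/complete_onP; split => //; apply/fsubsetP => u uf.
have /XsP [j E] := fsubsetP fX u uf.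
by apply/XsP; exists j; rewrite E Hc' // inE -E.
Qed.

Lemma U_eq w0 w1 : U w0 = U w1.
Proof. by apply/eqP; rewrite eqEfsubset !U_sub. Qed.

Lemma Kc0 w0 : Kc w0 0 = complete_on r (Xs w0).
Proof.
rewrite /Kc (@Xs_ext _ w0) // => j.
by rewrite /word big1 ?add0r // => l _; rewrite mxE mul0r.
Qed.

Lemma U_minus w0 : U w0 `\` Kc w0 0 = \bigcup_(c <- [seq c <- enum 'rV[F]_r | c != 0]) Kc w0 c.
Proof.
apply/fsetP => f; apply/fsetDP/bigfcupP => [[/bigfcupP [c _ fc] fn0]|[c]].
  exists c => //; rewrite mem_filter mem_enum andbT.
  rewrite andbT; by apply: contraNneq fn0 => <-.
rewrite andbT mem_filter mem_enum andbT => cn0 fc; split.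
  by apply/bigfcupP; exists c; rewrite ?mem_enum.
by have /fdisjointP := Kc_disj w0 cn0; apply.
Qed.

Lemma dec_minus w0 : has_decomposition q r (U w0 `\` complete_on r (Xs w0)).
Proof.
rewrite -Kc0 U_minus; apply: (dec_seq 0).
- by rewrite filter_uniq ?enum_uniq.
- by move=> c _; apply: Kc_clique.
- by move=> c c' _ _; apply: Kc_disj.
Qed.

Lemma trade w0 w1 : exists G : graph,
  is_rgraph r G /\ complete_on r (Xs w0) `<=` G /\ complete_on r (Xs w1) `<=` G /\
   has_decomposition q r (G `\` complete_on r (Xs w0)) /\
   has_decomposition q r (G `\` complete_on r (Xs w1)) /\
   (forall f u, f \in G -> u \in f -> exists j s, u = phi j s).
Proof.
exists (U w0); split; [|split; [|split; [|split; [|split]]]].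
- by move=> f /bigfcupP [c _ /complete_onP []].
- by rewrite -Kc0; apply/fsubsetP => f fK; apply/bigfcupP; exists 0; rewrite ?mem_enum.
- by rewrite (U_eq w0 w1) -Kc0; apply/fsubsetP => f fK; apply/bigfcupP; exists 0; rewrite ?mem_enum.
- exact: dec_minus.
- by rewrite (U_eq w0 w1); apply: dec_minus.
- move=> f u /bigfcupP [c _ /complete_onP [fX _]] uf.
  by have /XsP [j ->] := fsubsetP fX u uf; exists j, (word al c w0 j).
Qed.
End Trade.

Local Open Scope fset_scope.
Local Open Scope nat_scope.

Lemma divmod_inj a a' b b' m : a < m -> a' < m -> a + m * b = a' + m * b' -> a = a' /\ b = b'.
Proof.
move=> am a'm E.
have Em := congr1 (modn^~ m) E; have Ed := congr1 (divn^~ m) E; move: Em Ed => /=.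
rewrite ![_ + m * _]addnC ![m * _]mulnC !modnMDl !divnMDl ?(leq_ltn_trans _ am) //.
by rewrite !modn_small // !divn_small // !addn0 => -> ->.
Qed.

Section Enum.
Variables (q r : nat) (e : {fset nat}).
Hypothesis (ce : #|` e| = r).
Definition sX (X : {fset nat}) := enum_fset e ++ enum_fset (X `\` e).
Definition xX (X : {fset nat}) (j : 'I_q) := nth 0 (sX X) j.

Variables (X : {fset nat}) (eX : e `<=` X) (cX : #|` X| = q).
Lemma sX_mem u : (u \in sX X) = (u \in X).
Proof.
rewrite mem_cat; apply/idP/idP => [/orP [ue|]|uX].
- exact: fsubsetP eX u ue.
- by move=> /fsetDP [].
- by case: (boolP (u \in e)) => ue //=; apply/fsetDP.
Qed.
Lemma sX_uniq : uniq (sX X).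
Proof.
rewrite cat_uniq !fset_uniq /= andbT; apply/hasPn => u /fsetDP [_ ue].
exact: ue.
Qed.
Lemma sX_size : size (sX X) = q.
Proof.
rewrite -cX; apply: perm_size; apply: uniq_perm; rewrite ?sX_uniq ?fset_uniq //.
by move=> u; rewrite sX_mem.
Qed.
Lemma xX_in j : xX X j \in X.
Proof. by rewrite -sX_mem mem_nth // sX_size. Qed.
Lemma xX_inj : injective (xX X).
Proof.
move=> i j /eqP; rewrite /xX nth_uniq ?sX_size ?sX_uniq // => /eqP; exact: ord_inj.
Qed.
Lemma xX_surj u : u \in X -> exists j, xX X j = u.
Proof.
rewrite -sX_mem => us.
have iq : index u (sX X) < q by rewrite -sX_size index_mem.
by exists (Ordinal iq); rewrite /xX nth_index.
Qed.
Lemma xX_e (j : 'I_q) : (j < r) = (xX X j \in e).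
Proof.
rewrite /xX /sX nth_cat ce; case: ltnP => jr.
  by rewrite mem_nth // ce.
have : nth 0 (enum_fset (X `\` e)) (j - r) \in X `\` e.
  apply: mem_nth; rewrite -(ltn_add2l r) subnKC //.
  move: (sX_size); rewrite /sX size_cat ce => ->; exact: ltn_ord.
by move=> /fsetDP [_ /negPf ->].
Qed.
Lemma xX_e2 u : u \in e -> exists j : 'I_q, j < r /\ xX X j = u.
Proof.
move=> ue; have uX := fsubsetP eX u ue; have [j E] := xX_surj uX.
by exists j; rewrite xX_e E.
Qed.
End Enum.

Lemma xX_same q r e X Y (j : 'I_q) : #|` e| = r -> j < r -> xX e X j = xX e Y j.
Proof. by move=> ce jr; rewrite /xX /sX !nth_cat ce jr. Qed.

Lemma inter_e (r : nat) X1 X2 (e : edge) : 0 < r ->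
  complete_on r X1 `&` complete_on r X2 = [fset e] ->
  forall u, u \in X1 -> u \in X2 -> u \in e.
Proof.
move=> r0 E u u1 u2.
have : e \in complete_on r X1 `&` complete_on r X2 by rewrite E inE.
move=> /fsetIP [/complete_onP [e1 ce] /complete_onP [e2 _]].
apply/negPn/negP => ue.
have : e != fset0 by rewrite -cardfs_gt0 ce.
move=> /fset0Pn [w we].
pose e' := u |` (e `\ w).
have e'in : forall X, u \in X -> e `<=` X -> e' \in complete_on r X.
  move=> X uX eX; apply/complete_onP; split.
    apply/fsubsetP => y; rewrite !inE => /orP [/eqP ->//|/andP [_ ye]].
    exact: fsubsetP eX y ye.
  rewrite cardfsU1 in_fsetD1 (negPf ue) andbF /=.
  by move: ce; rewrite (cardfsD1 w) we add1n => ->.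
have : e' \in complete_on r X1 `&` complete_on r X2 by rewrite inE !e'in.
rewrite E inE => /eqP E'; move/negP: ue; apply.
by rewrite -E' !inE eqxx.
Qed.

Section Main.
Variables (q r : nat) (X1 X2 e : {fset nat}).
Hypotheses (r0 : 0 < r) (c1 : #|` X1| = q) (c2 : #|` X2| = q) (eX1 : e `<=` X1)
  (eX2 : e `<=` X2) (ce : #|` e| = r) (X12 : forall u, u \in X1 -> u \in X2 -> u \in e).
Variables (p : nat) (pp : prime p) (qp : q < p).

Let x1 := xX (q := q) e X1.
Let x2 := xX (q := q) e X2.
Definition NN := (\max_(u <- enum_fset (X1 `|` X2)) u).+1.
Lemma NN_gt u : u \in X1 `|` X2 -> u < NN.
Proof. by move=> uX; rewrite ltnS; apply: (@leq_bigmax_seq _ _ xpredT (fun u => u)). Qed.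
Definition MM := NN + q.

Definition al (j : 'I_q) : 'F_p := ((j : nat)%:R)%R.
Lemma al_inj : injective al.
Proof.
move=> i j E; have := congr1 (fun x : 'F_p => x : nat) E.
rewrite /al /= !val_Fp_nat // !modn_small ?(ltn_trans (ltn_ord _) qp) //.
exact: ord_inj.
Qed.

Definition vv (j : 'I_q) : 'F_p := if r <= j then 1%R else 0%R.

Definition phi1 (j : 'I_q) (s : 'F_p) : nat :=
  if s == 0%R then x1 j else if (s == 1%R) && (r <= j) then NN + j
  else MM + 2 * (j + q * s).
Definition phi2 (j : 'I_q) (s : 'F_p) : nat :=
  if s == 0%R then (if r <= j then NN + j else x1 j)
  else if (s == 1%R) && (r <= j) then x2 j
  else MM + (2 * (j + q * s) + 1).

Lemma x1_lt j : x1 j < NN.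
Proof. by apply: NN_gt; rewrite inE xX_in. Qed.
Lemma x2_lt j : x2 j < NN.
Proof. by apply: NN_gt; rewrite inE xX_in ?orbT. Qed.

Lemma fresh_inj (j j' : 'I_q) (s s' : 'F_p) : j + q * s = j' + q * s' -> j = j' /\ s = s'.
Proof.
move=> E; have [E1 E2] := divmod_inj (ltn_ord j) (ltn_ord j') E; split.
  exact: ord_inj.
exact: val_inj.
Qed.

Lemma phi1_inj j s j' s' : phi1 j s = phi1 j' s' -> j = j' /\ s = s'.
Proof.
have := x1_lt j; have := x1_lt j'; have := ltn_ord j; have := ltn_ord j'.
rewrite /phi1 /MM.
case: (s =P 0%R) => [->|sn0]; case: (s' =P 0%R) => [->|sn0'].
- by move=> _ _ _ _ /(xX_inj eX1 c1) ->.
- by case: ifP => _ A B C D E; exfalso; lia.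
- by case: ifP => _ A B C D E; exfalso; lia.
case: ifP => [/andP [/eqP -> jr]|_]; case: ifP => [/andP [/eqP -> jr']|_].
- by move=> _ _ _ _ /eqP; rewrite eqn_add2l => /eqP /ord_inj.
- by move=> A B C D E; exfalso; lia.
- by move=> A B C D E; exfalso; lia.
move=> _ _ _ _ /eqP; rewrite eqn_add2l eqn_mul2l /= => /eqP.
exact: fresh_inj.
Qed.

Lemma x1_e (j : 'I_q) : (j < r) = (x1 j \in e).
Proof. exact: xX_e. Qed.
Lemma x2_e (j : 'I_q) : (j < r) = (x2 j \in e).
Proof. exact: xX_e. Qed.
Lemma x12 (j : 'I_q) : j < r -> x1 j = x2 j.
Proof. exact: xX_same. Qed.

Lemma phi2_inj j s j' s' : phi2 j s = phi2 j' s' -> j = j' /\ s = s'.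
Proof.
have := x1_lt j; have := x1_lt j'; have := x2_lt j; have := x2_lt j'.
have := ltn_ord j; have := ltn_ord j'.
rewrite /phi2 /MM.
case: (s =P 0%R) => [->|sn0]; case: (s' =P 0%R) => [->|sn0'].
- case: ifP => jr; case: ifP => jr'.
  + by move=> _ _ _ _ _ _ /eqP; rewrite eqn_add2l => /eqP /ord_inj.
  + by move=> A B C D E F G; exfalso; lia.
  + by move=> A B C D E F G; exfalso; lia.
  + by move=> _ _ _ _ _ _ /(xX_inj eX1 c1) ->.
- case: ifP => jr; case: ifP => [/andP [/eqP -> jr']|_].
  + by move=> A B C D E F G; exfalso; lia.
  + by move=> A B C D E F G; exfalso; lia.
  + move=> _ _ _ _ _ _ E; exfalso.
    have := x1_e j; rewrite ltnNge jr /= => /esym h1.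
    have := x2_e j'; rewrite ltnNge jr' /= => /esym h2.
    by move: h1; rewrite E h2.
  + by move=> A B C D E F G; exfalso; lia.
- case: ifP => [/andP [/eqP -> jr]|_]; case: ifP => jr'.
  + by move=> A B C D E F G; exfalso; lia.
  + move=> _ _ _ _ _ _ E; exfalso.
    have := x1_e j'; rewrite ltnNge jr' /= => /esym h1.
    have := x2_e j; rewrite ltnNge jr /= => /esym h2.
    by move: h1; rewrite -E h2.
  + by move=> A B C D E F G; exfalso; lia.
  + by move=> A B C D E F G; exfalso; lia.
case: ifP => [/andP [/eqP -> jr]|_]; case: ifP => [/andP [/eqP -> jr']|_].
- by move=> _ _ _ _ _ _ /(xX_inj eX2 c2) ->.
- by move=> A B C D E F G; exfalso; lia.
- by move=> A B C D E F G; exfalso; lia.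
move=> _ _ _ _ _ _ /eqP; rewrite eqn_add2l eqn_add2r eqn_mul2l /= => /eqP.
exact: fresh_inj.
Qed.

Lemma I1 j s : phi1 j s \in X1 `|` X2 -> phi1 j s \in X1.
Proof.
move=> /NN_gt; rewrite /phi1 /MM; case: ifP => _; first by rewrite xX_in.
by case: ifP => _ A; exfalso; lia.
Qed.

Lemma I2 j s : phi2 j s \in X1 `|` X2 -> phi2 j s \in X2.
Proof.
move=> /NN_gt; rewrite /phi2 /MM; case: ifP => _.
  case: ifP => jr A; first by exfalso; lia.
  apply: (fsubsetP eX2); rewrite -x1_e ltnNge jr //.
case: ifP => _ A; first by rewrite xX_in.
by exfalso; lia.
Qed.

Lemma phi1v j : phi1 j (vv j) = phi2 j 0%R.
Proof.
rewrite /phi1 /phi2 /vv; case: (leqP r j) => jr; last by rewrite eqxx.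
by rewrite oner_eq0 eqxx /=; case: leqP jr.
Qed.

Lemma phi2v j : phi2 j (vv j) = x2 j.
Proof.
rewrite /phi2 /vv; case: (leqP r j) => jr; last by rewrite eqxx x12.
by rewrite oner_eq0 eqxx /=; case: leqP jr.
Qed.

Lemma I3 j s j' s' : phi1 j s = phi2 j' s' -> phi1 j s \in Xs phi1 vv.
Proof.
have := x1_lt j; have := x2_lt j'; have := ltn_ord j; have := ltn_ord j'.
have E1 := x1_e j; have E2 := x2_e j'.
move=> A B C D E.
suff -> : phi1 j s = phi1 j (vv j) by apply/XsP; exists j.
move: E; rewrite /phi1 /phi2 /vv /MM.
case: (s =P 0%R) => [_|sn0].
  case: (leqP r j) => jr; last by rewrite eqxx.
  have nx : x1 j \notin e by rewrite -E1 -leqNgt.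
  case: (s' =P 0%R) => [_|sn0'].
    by case: ifP => jr' E; [exfalso; lia|move: nx; rewrite E -x1_e ltnNge jr'].
  case: ifP => [/andP [_ jr'] E|_ E]; last by exfalso; lia.
  have : x1 j \in e by apply: X12; [rewrite xX_in | rewrite E xX_in].
  by rewrite (negPf nx).
case: ifP => [/andP [_ jr] _|_].
  by move: jr; case: leqP => // _ _; rewrite oner_eq0 eqxx.
have F1 := x1_lt j'.
case: (s' =P 0%R) => _; first by case: ifP => _ E; exfalso; lia.
by case: ifP => _ E; exfalso; lia.
Qed.

Lemma Xs1 : Xs phi1 (fun _ => 0%R) = X1.
Proof.
apply/fsetP => u; apply/XsP/idP => [[j ->]|uX]; first by rewrite /phi1 eqxx xX_in.
by have [j <-] := xX_surj eX1 c1 uX; exists j; rewrite /phi1 eqxx.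
Qed.

Lemma Xs2 : Xs phi2 vv = X2.
Proof.
apply/fsetP => u; apply/XsP/idP => [[j ->]|uX]; first by rewrite phi2v xX_in.
by have [j <-] := xX_surj eX2 c2 uX; exists j; rewrite phi2v.
Qed.

Lemma XsT : Xs phi1 vv = Xs phi2 (fun _ => 0%R).
Proof.
by apply/fsetP => u; apply/XsP/XsP => [][j ->]; exists j; rewrite phi1v.
Qed.

Lemma vset_sub k X : vset (complete_on k X) `<=` X.
Proof.
apply/fsubsetP => u /bigfcupP [f /andP [fK _] uf].
by have /complete_onP [fX _] := fK; exact: fsubsetP fX u uf.
Qed.

Lemma main_hinge : complete_on r X1 `&` complete_on r X2 = [fset e] ->
  exists H, is_indep_hinge q r (complete_on r X1) (complete_on r X2) e H.
Proof.
move=> E12.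
have [G1 [g1r [g1a [g1b [g1c [g1d g1v]]]]]] :=
  trade r al_inj phi1_inj (fun _ => 0%R) vv.
have [G2 [g2r [g2a [g2b [g2c [g2d g2v]]]]]] :=
  trade r al_inj phi2_inj (fun _ => 0%R) vv.
rewrite Xs1 in g1a g1c; rewrite Xs2 in g2b g2d; rewrite -XsT in g2a g2c.
set S1 := complete_on r X1 in E12 g1a g1c *.
set S2 := complete_on r X2 in E12 g2b g2d *.
set T := complete_on r (Xs phi1 vv) in g1b g1d g2a g2c *.
have GT : forall f, f \in G1 -> f \in G2 -> f \in T.
  move=> f f1 f2; apply/complete_onP; split; last exact: g1r.
  apply/fsubsetP => u uf.
  have [j [s Eu]] := g1v f u f1 uf; have [j' [s' Eu']] := g2v f u f2 uf.
  by rewrite Eu; apply: (I3 (j' := j') (s' := s')); rewrite -Eu.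
have ee : forall f, (f \in S1) && (f \in S2) = (f == e).
  by move=> f; rewrite -in_fsetI E12 inE.
exists ((G1 `|` G2) `\` (S1 `|` S2)); split; [split; [|split; [|split]]|].
- by move=> f /fsetDP [/fsetUP [/g1r|/g2r]].
- by apply/fdisjointP => f /fsetDP [].
- have -> : (G1 `|` G2) `\` (S1 `|` S2) `|` (S1 `\ e) = (G1 `\` T) `|` (G2 `\` S2).
    apply/fsetP => f.
    have a := fsubsetP g1a f; have b := fsubsetP g1b f; have c := fsubsetP g2a f.
    have d := fsubsetP g2b f; have gt := GT f; have eef := ee f.
    rewrite !(in_fsetU, in_fsetD, in_fsetD1, in_fset1); move: a b c d gt eef.
    case: (f \in G1); case: (f \in G2); case: (f \in S1); case: (f \in S2);
      case: (f \in T); case: (f == e) => //= a b c d gt eef;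
      by [ have := a isT | have := b isT | have := c isT | have := d isT |
           have := gt isT isT | idtac ].
  apply: dec_union => //; apply/fdisjointP => f /fsetDP [f1 fT].
  by apply/negP => /fsetDP [f2 _]; move: fT; rewrite GT.
- have -> : (G1 `|` G2) `\` (S1 `|` S2) `|` (S2 `\ e) = (G1 `\` S1) `|` (G2 `\` T).
    apply/fsetP => f.
    have a := fsubsetP g1a f; have b := fsubsetP g1b f; have c := fsubsetP g2a f.
    have d := fsubsetP g2b f; have gt := GT f; have eef := ee f.
    rewrite !(in_fsetU, in_fsetD, in_fsetD1, in_fset1); move: a b c d gt eef.
    case: (f \in G1); case: (f \in G2); case: (f \in S1); case: (f \in S2);
      case: (f \in T); case: (f == e) => //= a b c d gt eef;
      by [ have := a isT | have := b isT | have := c isT | have := d isT |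
           have := gt isT isT | idtac ].
  apply: dec_union => //; apply/fdisjointP => f /fsetDP [f1 fS].
  apply/negP => /fsetDP [f2 fT]; move/negP: fT; apply; exact: GT.
- move=> f /fsetDP [fG fS] fsub.
  have fX : f `<=` X1 `|` X2.
    apply: (fsubset_trans fsub); apply: fsetUSS; exact: vset_sub.
  move/negP: fS; apply; case/fsetUP: fG => fG; rewrite inE.
  + apply/orP; left; apply/complete_onP; split; last exact: g1r.
    apply/fsubsetP => u uf; have [j [s Eu]] := g1v f u fG uf.
    by rewrite Eu; apply: I1; rewrite -Eu; apply: (fsubsetP fX).
  + apply/orP; right; apply/complete_onP; split; last exact: g2r.
    apply/fsubsetP => u uf; have [j [s Eu]] := g2v f u fG uf.
    by rewrite Eu; apply: I2; rewrite -Eu; apply: (fsubsetP fX).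
Qed.
End Main.

Theorem lemma2p5 (q r : nat) (S1 S2 : graph) (e : edge) :
  (1 <= r)%N -> (r < q)%N ->
  is_clique q r S1 -> is_clique q r S2 ->
  S1 `&` S2 = [fset e] ->
  exists H : graph, is_indep_hinge q r S1 S2 e H.
Proof.
move=> r1 rq [X1 [c1 ->]] [X2 [c2 ->]] E12.
have : e \in complete_on r X1 `&` complete_on r X2 by rewrite E12 in_fset1 eqxx.
move=> /fsetIP [/complete_onP [eX1 ce] /complete_onP [eX2 _]].
have X12 := inter_e r1 E12.
case: (prime_above q) => p qp pp.
exact: (main_hinge r1 c1 c2 eX1 eX2 ce X12 pp qp E12).
Qed.
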